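(* Assume the hypotheses listed in the context. Then there exists $\delta^*>0$ with the following property: if $0<\delta_1,\delta_2\le\delta^*$ and, for $i=1,2$, $W^i=(w^i_1,\dots,w^i_n)\in C^1([-\delta_i,\delta_i];\mathbb R^n)$ with $w^i_1([-\delta_i,\delta_i])\subseteq[-\delta_i,\delta_i]$ satisfies $(W^i)'(t)=H(t;W^i(t),W^i(w^i_1(t));(W^i)'(t),(W^i)'(w^i_1(t)))$ for $|t|\le\delta_i$, $W^i(0)=0$, $(W^i)'(0)=P$, and $(t;W^i(t),W^i(w^i_1(t));(W^i)'(t),(W^i)'(w^i_1(t)))\in N_\varepsilon(\mathcal P)$ for $|t|\le\delta_i$, then $W^1=W^2$ on $[-\min(\delta_1,\delta_2),\min(\delta_1,\delta_2)]$.
   Context: Hypotheses: $\|\cdot\|$ is a norm on $\mathbb R^n$; $H=(h_1,\dots,h_n)$ is continuous from an open subset of $\mathbb R^{4n+1}$ to $\mathbb R^n$, written $H(t;\zeta^0,\zeta^1;\xi^0,\xi^1)$; $P=(p_1,\dots,p_n)$ satisfies $P=H(0;\mathbf0,\mathbf0;P,P)$ and $|p_1|\le1$; $\mathcal P=(0;\mathbf0,\mathbf0;P,P)$; $N_\varepsilon(\mathcal P)=\{(t;\zeta^0,\zeta^1;\xi^0,\xi^1):|t|+\|\zeta^0\|+\|\zeta^1\|+\|\xi^0-P\|+\|\xi^1-P\|\le\varepsilon\}$ lies in the domain of $H$, and on it: (i) $H$ is $\Lambda$-Lipschitz in $t$; (ii) $\|H(t;\bar\zeta^0,\bar\zeta^1;\xi^0,\xi^1)-H(t;\zeta^0,\zeta^1;\xi^0,\xi^1)\|\le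 L_0\|\bar\zeta^0-\zeta^0\|+L_1\|\bar\zeta^1-\zeta^1\|$; (iii) $\|H(t;\zeta^0,\zeta^1;\bar\xi^0,\bar\xi^1)-H(t;\zeta^0,\zeta^1;\xi^0,\xi^1)\|\le C_0\|\bar\xi^0-\xi^0\|+C_1\|\bar\xi^1-\xi^1\|$ with $C_0+C_1<1$; (iv) $|h_1|\le1$. *)

(* Defs.v *)
From Stdlib Require Import Reals Lra.
From Stdlib Require Fin.
Open Scope R_scope.

Definition vec (n : nat) := Fin.t n -> R.

Definition vzero {n} : vec n := fun _ => 0.
Definition vadd {n} (x y : vec n) : vec n := fun i => x i + y i.
Definition vsub {n} (x y : vec n) : vec n := fun i => x i - y i.
Definition vscale {n} (c : R) (x : vec n) : vec n := fun i => c * x i.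

Definition is_norm {n} (nrm : vec n -> R) : Prop :=
  (forall x, 0 <= nrm x) /\
  (forall x, nrm x = 0 -> forall i, x i = 0) /\
  (forall c x, nrm (vscale c x) = Rabs c * nrm x) /\
  (forall x y, nrm (vadd x y) <= nrm x + nrm y).

(* Points (t; z0, z1; x0, x1) of R^{4n+1} are given as 5 separate arguments.
   Distance on R^{4n+1} built from the norm (all norms are equivalent). *)
Definition dist5 {n} (nrm : vec n -> R)
  (t : R) (z0 z1 x0 x1 : vec n) (t' : R) (z0' z1' x0' x1' : vec n) : R :=
  Rabs (t - t') + nrm (vsub z0 z0') + nrm (vsub z1 z1')
  + nrm (vsub x0 x0') + nrm (vsub x1 x1').

Definition open5 {n} (nrm : vec n -> R)
  (U : R -> vec n -> vec n -> vec n -> vec n -> Prop) : Prop :=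
  forall t z0 z1 x0 x1, U t z0 z1 x0 x1 ->
    exists r, 0 < r /\ forall t' z0' z1' x0' x1',
      dist5 nrm t' z0' z1' x0' x1' t z0 z1 x0 x1 < r -> U t' z0' z1' x0' x1'.

Definition continuous_on5 {n} (nrm : vec n -> R)
  (U : R -> vec n -> vec n -> vec n -> vec n -> Prop)
  (H : R -> vec n -> vec n -> vec n -> vec n -> vec n) : Prop :=
  forall t z0 z1 x0 x1, U t z0 z1 x0 x1 ->
    forall eps, 0 < eps -> exists d, 0 < d /\ forall t' z0' z1' x0' x1',
      U t' z0' z1' x0' x1' ->
      dist5 nrm t' z0' z1' x0' x1' t z0 z1 x0 x1 < d ->
      nrm (vsub (H t' z0' z1' x0' x1') (H t z0 z1 x0 x1)) < eps.

Definition Neps {n} (nrm : vec n -> R) (eps : R) (P : vec n)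
  (t : R) (z0 z1 x0 x1 : vec n) : Prop :=
  Rabs t + nrm z0 + nrm z1 + nrm (vsub x0 P) + nrm (vsub x1 P) <= eps.

Definition C1_on {n} (a b : R) (W W' : R -> vec n) : Prop :=
  (forall t, a <= t <= b -> forall i : Fin.t n,
     forall eps, 0 < eps -> exists d, 0 < d /\ forall h, h <> 0 -> Rabs h < d ->
       a <= t + h <= b ->
       Rabs ((W (t + h) i - W t i) / h - W' t i) < eps) /\
  (forall t, a <= t <= b -> forall i : Fin.t n,
     forall eps, 0 < eps -> exists d, 0 < d /\ forall s, a <= s <= b ->
       Rabs (s - t) < d -> Rabs (W' s i - W' t i) < eps).

(* Main.v *)
Require Import Defs.
From Stdlib Require Import Reals Lra Rtopology FunctionalExtensionality ClassicalEpsilon.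
Open Scope R_scope.


Definition vcons {n} (a : R) (y : vec n) : vec (S n) :=
  fun i => Fin.caseS' i (fun _ => R) a (fun j => y j).
Definition vtl {n} (x : vec (S n)) : vec n := fun j => x (Fin.FS j).

Lemma vcons_F1 {n} a (y : vec n) : vcons a y Fin.F1 = a.
Proof. reflexivity. Qed.
Lemma vcons_FS {n} a (y : vec n) j : vcons a y (Fin.FS j) = y j.
Proof. reflexivity. Qed.

Lemma vec_ext {n} (x y : vec n) : (forall i, x i = y i) -> x = y.
Proof. intros; apply functional_extensionality; auto. Qed.

Lemma vec_eta {n} (x : vec (S n)) : x = vcons (x Fin.F1) (vtl x).
Proof. apply vec_ext; intro i. apply (Fin.caseS' i); reflexivity. Qed.

Lemma vec0 (x : vec 0) : x = vzero.
Proof. apply vec_ext; intro i. apply (Fin.case0 (fun _ => _) i). Qed.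

Section NormFacts.
Context {n : nat} (N : vec n -> R) (HN : is_norm N).

Lemma nrm_ge0 x : 0 <= N x. Proof. apply HN. Qed.
Lemma nrm_def x : N x = 0 -> forall i, x i = 0. Proof. apply HN. Qed.
Lemma nrm_scale c x : N (vscale c x) = Rabs c * N x. Proof. apply HN. Qed.
Lemma nrm_tri x y : N (vadd x y) <= N x + N y. Proof. apply HN. Qed.

Lemma nrm_zero : N vzero = 0.
Proof.
  replace (vzero : vec n) with (vscale 0 (vzero : vec n)).
  - rewrite nrm_scale, Rabs_R0; ring.
  - apply vec_ext; intro; unfold vscale, vzero; ring.
Qed.

Lemma nrm_sub_sym x y : N (vsub x y) = N (vsub y x).
Proof.
  replace (vsub x y) with (vscale (-1) (vsub y x)).
  - assert (Rabs (-1) = 1) by (unfold Rabs; destruct Rcase_abs; lra).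
    rewrite nrm_scale, H; ring.
  - apply vec_ext; intro; unfold vscale, vsub; ring.
Qed.

Lemma nrm_sub_tri x y z : N (vsub x z) <= N (vsub x y) + N (vsub y z).
Proof.
  replace (vsub x z) with (vadd (vsub x y) (vsub y z)) by
    (apply vec_ext; intro; unfold vadd, vsub; ring).
  apply nrm_tri.
Qed.

Lemma nrm_sub0 x : N (vsub x vzero) = N x.
Proof. f_equal; apply vec_ext; intro; unfold vsub, vzero; ring. Qed.

Lemma nrm_subxx x : N (vsub x x) = 0.
Proof. replace (vsub x x) with (vzero : vec n) by (apply vec_ext; intro; unfold vsub, vzero; ring). apply nrm_zero. Qed.

Lemma nrm_sub_le x y : N (vsub x y) <= N x + N y.
Proof.
  rewrite <- (nrm_sub0 x), <- (nrm_sub0 y), (nrm_sub_sym y).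
  apply nrm_sub_tri.
Qed.

Lemma nrm_rev x y : N x - N y <= N (vsub x y).
Proof.
  pose proof (nrm_sub_tri x y vzero). rewrite !nrm_sub0 in H. lra.
Qed.
End NormFacts.

Lemma tail_norm {n} (N : vec (S n) -> R) : is_norm N -> is_norm (fun y : vec n => N (vcons 0 y)).
Proof.
  intros [H1 [H2 [H3 H4]]]; split; [|split; [|split]].
  - intros; apply H1.
  - intros y Hy i. apply (H2 _ Hy (Fin.FS i)).
  - intros c y. rewrite <- H3. f_equal. apply vec_ext; intro i.
    apply (Fin.caseS' i); unfold vscale; simpl; try intros; simpl; ring.
  - intros x y. eapply Rle_trans; [|apply H4]. right; f_equal.
    apply vec_ext; intro i. apply (Fin.caseS' i); unfold vadd; simpl; try intros; simpl; ring.
Qed.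

Definition e0 {n} : vec (S n) := vcons 1 vzero.

Lemma vcons_split {n} a (y : vec n) : vcons a y = vadd (vscale a e0) (vcons 0 y).
Proof.
  apply vec_ext; intro i. apply (Fin.caseS' i); unfold vadd, vscale, e0, vzero; simpl; intros; ring.
Qed.

Lemma norm_upper : forall n (N : vec n -> R), is_norm N ->
  exists c, 0 <= c /\ forall x B, (forall i, Rabs (x i) <= B) -> N x <= c * B.
Proof.
  induction n; intros N HN.
  - exists 0; split; [lra|]. intros x B _. rewrite (vec0 x), (nrm_zero N HN). lra.
  - destruct (IHn _ (tail_norm N HN)) as [c [Hc Hb]].
    exists (N e0 + c); split.
    + pose proof (nrm_ge0 N HN e0); lra.
    + intros x B Hx.
      assert (HB : 0 <= B) by (eapply Rle_trans; [apply Rabs_pos|apply (Hx Fin.F1)]).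
      rewrite (vec_eta x), vcons_split.
      eapply Rle_trans; [apply (nrm_tri N HN)|].
      rewrite (nrm_scale N HN).
      pose proof (Hx Fin.F1). pose proof (Hb (vtl x) B (fun j => Hx (Fin.FS j))).
      pose proof (nrm_ge0 N HN e0).
      assert (Rabs (x Fin.F1) * N e0 <= B * N e0) by (apply Rmult_le_compat_r; lra).
      nra.
Qed.


Lemma vcons_scale {n} c a (y : vec n) : vscale c (vcons a y) = vcons (c * a) (vscale c y).
Proof. apply vec_ext; intro i. apply (Fin.caseS' i); unfold vscale; simpl; intros; ring. Qed.
Lemma vcons_add {n} a b (y z : vec n) : vadd (vcons a y) (vcons b z) = vcons (a + b) (vadd y z).
Proof. apply vec_ext; intro i. apply (Fin.caseS' i); unfold vadd; simpl; intros; ring. Qed.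

Lemma e0_pos {n} (N : vec (S n) -> R) : is_norm N -> 0 < N e0.
Proof.
  intros HN. destruct (Rle_lt_or_eq_dec 0 (N e0) (nrm_ge0 N HN e0)) as [h|h]; auto.
  pose proof (nrm_def N HN e0 (eq_sym h) Fin.F1). unfold e0 in H; simpl in H. lra.
Qed.

Lemma min_attained {n} (N : vec (S n) -> R) (HN : is_norm N) (y : vec n) :
  exists q, (forall a, q <= N (vcons a y)) /\ exists a, q = N (vcons a y).
Proof.
  pose (psi := fun a => N (vcons a y)).
  pose proof (e0_pos N HN) as He.
  assert (Lip : forall a b, Rabs (psi a - psi b) <= Rabs (a - b) * N e0).
  { intros a b. unfold psi.
    assert (E1 : vcons a y = vadd (vscale (a - b) e0) (vcons b y)).
    { rewrite vcons_split, (vcons_split b). apply vec_ext; intro i; unfold vadd, vscale; ring. }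
    assert (E2 : vcons b y = vadd (vscale (b - a) e0) (vcons a y)).
    { rewrite vcons_split, (vcons_split a). apply vec_ext; intro i; unfold vadd, vscale; ring. }
    pose proof (nrm_tri N HN (vscale (a - b) e0) (vcons b y)).
    pose proof (nrm_tri N HN (vscale (b - a) e0) (vcons a y)).
    rewrite <- E1 in H. rewrite <- E2 in H0. rewrite !(nrm_scale N HN) in *.
    rewrite Rabs_minus_sym in H0. apply Rabs_le; lra. }
  assert (Cont : forall c, continuity_pt psi c).
  { intros c. unfold continuity_pt, continue_in, limit1_in, limit_in; simpl; unfold R_dist.
    intros eps Heps. exists (eps / (N e0)); split.
    - apply Rlt_gt, Rdiv_lt_0_compat; lra.
    - intros x [_ Hx]. eapply Rle_lt_trans; [apply Lip|].
      apply (Rmult_lt_compat_r (N e0)) in Hx; auto. field_simplify in Hx; lra. }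
  set (R0 := 2 * psi 0 / N e0).
  assert (HR0 : 0 <= R0).
  { unfold R0. apply Rmult_le_pos; [pose proof (nrm_ge0 N HN (vcons 0 y)); unfold psi; lra|].
    left; apply Rinv_0_lt_compat; lra. }
  destruct (continuity_ab_min psi (- R0) R0 ltac:(lra) (fun c _ => Cont c)) as [mx [Hmx Hr]].
  exists (psi mx); split; [|exists mx; reflexivity].
  intros a. fold (psi a).
  destruct (Rle_dec (Rabs a) R0) as [h|h].
  - apply Hmx. unfold Rabs in h; destruct Rcase_abs in h; lra.
  - assert (h0 : psi mx <= psi 0) by (apply Hmx; lra).
    assert (E : vscale a e0 = vsub (vcons a y) (vcons 0 y)).
    { rewrite (vcons_split a). apply vec_ext; intro i; unfold vsub, vadd, vscale, e0; simpl.
      apply (Fin.caseS' i); simpl; intros; ring. }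
    pose proof (nrm_sub_le N HN (vcons a y) (vcons 0 y)). rewrite <- E, (nrm_scale N HN) in H.
    fold (psi a) (psi 0) in H.
    assert (R0 * N e0 = 2 * psi 0) by (unfold R0; field; lra).
    assert (R0 * N e0 <= Rabs a * N e0) by (apply Rmult_le_compat_r; lra).
    lra.
Qed.

Definition Qn {n} (N : vec (S n) -> R) (HN : is_norm N) (y : vec n) : R :=
  proj1_sig (constructive_indefinite_description _ (min_attained N HN y)).

Lemma Qn_spec {n} (N : vec (S n) -> R) (HN : is_norm N) (y : vec n) :
  (forall a, Qn N HN y <= N (vcons a y)) /\ exists a, Qn N HN y = N (vcons a y).
Proof. unfold Qn. destruct constructive_indefinite_description as [q Hq]. exact Hq. Qed.

Lemma Qn_norm {n} (N : vec (S n) -> R) (HN : is_norm N) : is_norm (Qn N HN).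
Proof.
  split; [|split; [|split]].
  - intros y. destruct (Qn_spec N HN y) as [_ [a ->]]. apply (nrm_ge0 N HN).
  - intros y Hy i. destruct (Qn_spec N HN y) as [_ [a Ha]]. rewrite Hy in Ha.
    exact (nrm_def N HN _ (eq_sym Ha) (Fin.FS i)).
  - intros c y. destruct (Qn_spec N HN y) as [H1 [a Ha]].
    destruct (Qn_spec N HN (vscale c y)) as [H2 [b Hb]].
    apply Rle_antisym.
    + rewrite Ha, <- (nrm_scale N HN), vcons_scale. apply H2.
    + destruct (Req_dec c 0) as [->|hc].
      * rewrite Rabs_R0, Rmult_0_l. rewrite Hb. apply (nrm_ge0 N HN).
      * rewrite Hb. replace (vcons b (vscale c y)) with (vscale c (vcons (b / c) y)).
        -- rewrite (nrm_scale N HN). apply Rmult_le_compat_l; [apply Rabs_pos|apply H1].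
        -- rewrite vcons_scale. f_equal. field; auto.
  - intros y z. destruct (Qn_spec N HN y) as [_ [a Ha]].
    destruct (Qn_spec N HN z) as [_ [b Hb]].
    destruct (Qn_spec N HN (vadd y z)) as [H3 _].
    eapply Rle_trans; [apply (H3 (a + b))|]. rewrite Ha, Hb, <- vcons_add. apply (nrm_tri N HN).
Qed.

Lemma norm_lower : forall n (N : vec n -> R), is_norm N ->
  exists c, 0 < c /\ forall x i, Rabs (x i) <= c * N x.
Proof.
  induction n; intros N HN.
  - exists 1; split; [lra|]. intros x i. apply (Fin.case0 (fun _ => _) i).
  - destruct (IHn _ (Qn_norm N HN)) as [c [Hc Hb]].
    destruct (norm_upper n _ (tail_norm N HN)) as [c2 [Hc2 Hu]].
    pose proof (e0_pos N HN) as He.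
    set (k := (1 + c2 * c) / N e0).
    assert (Hk : 0 < k) by (unfold k; apply Rdiv_lt_0_compat; nra).
    exists (c + k); split; [lra|].
    intros x i.
    assert (Ht : forall j, Rabs (vtl x j) <= c * N x).
    { intros j. eapply Rle_trans; [apply Hb|]. apply Rmult_le_compat_l; [lra|].
      destruct (Qn_spec N HN (vtl x)) as [H1 _]. rewrite (vec_eta x) at 2. apply H1. }
    pose proof (nrm_ge0 N HN x).
    apply (Fin.caseS' i).
    + assert (E : vscale (x Fin.F1) e0 = vsub x (vcons 0 (vtl x))).
      { rewrite (vec_eta x) at 2. rewrite (vcons_split (x Fin.F1)).
        apply vec_ext; intro j; unfold vsub, vadd, vscale, e0; simpl.
        apply (Fin.caseS' j); simpl; intros; ring. }
      pose proof (nrm_sub_le N HN x (vcons 0 (vtl x))). rewrite <- E, (nrm_scale N HN) in H0.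
      pose proof (Hu (vtl x) (c * N x) Ht).
      assert (Rabs (x Fin.F1) * N e0 <= (1 + c2 * c) * N x) by nra.
      assert (Rabs (x Fin.F1) <= k * N x).
      { unfold k. apply (Rmult_le_reg_r (N e0)); auto. field_simplify; try lra. }
      nra.
    + intros j. pose proof (Ht j). unfold vtl in H0. nra.
Qed.


Definition dwithin (a b : R) (f f' : R -> R) : Prop :=
  forall t, a <= t <= b -> forall eps, 0 < eps -> exists d, 0 < d /\
    forall h, h <> 0 -> Rabs h < d -> a <= t + h <= b ->
    Rabs ((f (t + h) - f t) / h - f' t) < eps.

Section Ext.
Variables (a b : R) (f f' : R -> R).
Definition gext (u : R) : R :=
  if Rlt_dec u a then f a + f' a * (u - a)
  else if Rlt_dec b u then f b + f' b * (u - b) else f u.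

Lemma gext_in u : a <= u <= b -> gext u = f u.
Proof. intros. unfold gext. destruct (Rlt_dec u a); [lra|]. destruct (Rlt_dec b u); [lra|]. auto. Qed.

Lemma gext_deriv : a < b -> dwithin a b f f' -> forall c, a <= c <= b ->
  derivable_pt_lim gext c (f' c).
Proof.
  intros Hab Hd c Hc eps Heps.
  destruct (Hd c Hc eps Heps) as [d [Hd0 Hdh]].
  assert (Hlin : forall h, h <> 0 -> Rabs ((f (c + h) - f c) / h - f' c) < eps ->
     Rabs ((f (c + h) - f c) / h - f' c) < eps) by auto.
  destruct (Req_dec c a) as [Ea|Na].
  - subst c. assert (Hp : 0 < Rmin d (b - a)) by (apply Rmin_glb_lt; lra).
    exists (mkposreal _ Hp); simpl. intros h hn hh.
    pose proof (Rmin_l d (b - a)); pose proof (Rmin_r d (b - a)).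
    rewrite (gext_in a) by lra.
    destruct (Rlt_dec h 0) as [hl|hl].
    + unfold gext. destruct (Rlt_dec (a + h) a); [|lra].
      replace ((f a + f' a * (a + h - a) - f a) / h - f' a) with 0 by (field; auto).
      rewrite Rabs_R0; auto.
    + assert (Rabs h = h) by (apply Rabs_right; lra).
      rewrite gext_in by lra. apply Hdh; auto; lra.
  - destruct (Req_dec c b) as [Eb|Nb].
    + subst c. assert (Hp : 0 < Rmin d (b - a)) by (apply Rmin_glb_lt; lra).
      exists (mkposreal _ Hp); simpl. intros h hn hh.
      pose proof (Rmin_l d (b - a)); pose proof (Rmin_r d (b - a)).
      rewrite (gext_in b) by lra.
      destruct (Rlt_dec 0 h) as [hl|hl].
      * unfold gext. destruct (Rlt_dec (b + h) a); [lra|]. destruct (Rlt_dec b (b + h)); [|lra].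
        replace ((f b + f' b * (b + h - b) - f b) / h - f' b) with 0 by (field; auto).
        rewrite Rabs_R0; auto.
      * assert (Rabs h = - h) by (apply Rabs_left1; lra).
        rewrite gext_in by lra. apply Hdh; auto; lra.
    + assert (Hp : 0 < Rmin d (Rmin (c - a) (b - c))) by
        (apply Rmin_glb_lt; [lra|apply Rmin_glb_lt; lra]).
      exists (mkposreal _ Hp); simpl. intros h hn hh.
      pose proof (Rmin_l d (Rmin (c - a) (b - c))); pose proof (Rmin_r d (Rmin (c - a) (b - c))).
      pose proof (Rmin_l (c - a) (b - c)); pose proof (Rmin_r (c - a) (b - c)).
      assert (-h <= Rabs h /\ h <= Rabs h) by (split; [rewrite <- Rabs_Ropp|]; apply RRle_abs).
      rewrite !gext_in by lra. apply Hdh; auto; lra.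
Qed.
End Ext.

Lemma mvt_le (a b M : R) (f f' : R -> R) :
  dwithin a b f f' -> (forall t, a <= t <= b -> Rabs (f' t) <= M) ->
  forall x y, a <= x <= b -> a <= y <= b -> Rabs (f y - f x) <= M * Rabs (y - x).
Proof.
  intros Hd HM.
  assert (key : forall x y, a <= x <= b -> a <= y <= b -> x < y -> Rabs (f y - f x) <= M * Rabs (y - x)).
  { intros x y Hx Hy Hxy.
    assert (Hab : a < b) by lra.
    destruct (MVT_cor2 (gext a b f f') f' x y Hxy) as [c [Hc1 Hc2]].
    - intros c Hc. apply gext_deriv; auto; lra.
    - rewrite !gext_in in Hc1 by lra. rewrite Hc1, Rabs_mult.
      apply Rmult_le_compat_r; [apply Rabs_pos|]. apply HM; lra. }
  intros x y Hx Hy.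
  destruct (Rtotal_order x y) as [h|[h|h]].
  - auto.
  - subst. rewrite !Rminus_diag, Rabs_R0.
    assert (0 <= M) by (eapply Rle_trans; [apply Rabs_pos|apply (HM y Hy)]). lra.
  - rewrite Rabs_minus_sym, (Rabs_minus_sym y). auto.
Qed.

Lemma sup_fix (S : R -> Prop) (B a C : R) : 0 <= C < 1 ->
  (forall x, S x -> x <= B) ->
  (forall M, (forall x, S x -> x <= M) -> forall x, S x -> x <= a + C * M) ->
  forall x, S x -> x <= a / (1 - C).
Proof.
  intros HC HB Hstep x Sx.
  destruct (completeness S (ex_intro _ B HB) (ex_intro _ x Sx)) as [mm [Hub Hlub]].
  assert (mm <= a + C * mm) by (apply Hlub; intros y Sy; apply (Hstep mm Hub y Sy)).
  assert (x <= mm) by (apply Hub; auto).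
  apply (Rmult_le_reg_r (1 - C)); [lra|]. unfold Rdiv. rewrite Rmult_assoc, Rinv_l by lra.
  assert (mm * (1 - C) <= a) by nra. nra.
Qed.


Lemma C1_dwithin {n} a b (W W' : R -> vec n) : C1_on a b W W' ->
  forall i, dwithin a b (fun t => W t i) (fun t => W' t i).
Proof. intros [HD _] i t Ht eps Heps. apply (HD t Ht i eps Heps). Qed.

Lemma dwithin_sub a b a' b' f f' : dwithin a b f f' -> a <= a' -> b' <= b -> dwithin a' b' f f'.
Proof.
  intros Hd Ha Hb t Ht eps Heps. destruct (Hd t ltac:(lra) eps Heps) as [d [Hd0 Hh]].
  exists d; split; auto. intros h h0 hd hi. apply Hh; auto; lra.
Qed.

Lemma dwithin_minus a b f f' g g' : dwithin a b f f' -> dwithin a b g g' ->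
  dwithin a b (fun t => f t - g t) (fun t => f' t - g' t).
Proof.
  intros Hf Hg t Ht eps Heps.
  destruct (Hf t Ht (eps/2) ltac:(lra)) as [d1 [Hd1 H1]].
  destruct (Hg t Ht (eps/2) ltac:(lra)) as [d2 [Hd2 H2]].
  exists (Rmin d1 d2); split; [apply Rmin_glb_lt; auto|].
  intros h h0 hd hi.
  pose proof (Rmin_l d1 d2); pose proof (Rmin_r d1 d2).
  specialize (H1 h h0 ltac:(lra) hi). specialize (H2 h h0 ltac:(lra) hi).
  replace ((f (t + h) - g (t + h) - (f t - g t)) / h - (f' t - g' t)) with
    (((f (t + h) - f t) / h - f' t) - ((g (t + h) - g t) / h - g' t)) by (field; auto).
  eapply Rle_lt_trans; [apply Rabs_triang|]. rewrite Rabs_Ropp. lra.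
Qed.

Section Main.
Variable m : nat.
Local Notation V := (vec (S m)).
Variable nrm : V -> R.
Hypothesis Hnorm : is_norm nrm.
Variable H : R -> V -> V -> V -> V -> V.
Variable P : V.
Hypothesis HP : P = H 0 vzero vzero P P.
Variables eps Lam L0 L1 C0 C1 : R.
Hypothesis Heps : 0 < eps.
Hypotheses (HLam : 0 <= Lam) (HL0 : 0 <= L0) (HL1 : 0 <= L1) (HC0 : 0 <= C0) (HC1 : 0 <= C1).
Hypothesis Hi : forall t t' z0 z1 x0 x1,
     Neps nrm eps P t z0 z1 x0 x1 -> Neps nrm eps P t' z0 z1 x0 x1 ->
     nrm (vsub (H t' z0 z1 x0 x1) (H t z0 z1 x0 x1)) <= Lam * Rabs (t' - t).
Hypothesis Hii : forall t z0 z1 z0' z1' x0 x1,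
     Neps nrm eps P t z0 z1 x0 x1 -> Neps nrm eps P t z0' z1' x0 x1 ->
     nrm (vsub (H t z0' z1' x0 x1) (H t z0 z1 x0 x1))
       <= L0 * nrm (vsub z0' z0) + L1 * nrm (vsub z1' z1).
Hypothesis Hiii : forall t z0 z1 x0 x1 x0' x1',
     Neps nrm eps P t z0 z1 x0 x1 -> Neps nrm eps P t z0 z1 x0' x1' ->
     nrm (vsub (H t z0 z1 x0' x1') (H t z0 z1 x0 x1))
       <= C0 * nrm (vsub x0' x0) + C1 * nrm (vsub x1' x1).
Hypothesis HC : C0 + C1 < 1.
Hypothesis Hiv : forall t z0 z1 x0 x1,
     Neps nrm eps P t z0 z1 x0 x1 -> Rabs (H t z0 z1 x0 x1 Fin.F1) <= 1.
Variables c1 c2 : R.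
Hypothesis Hc1 : 0 < c1.
Hypothesis Hlow : forall x i, Rabs (x i) <= c1 * nrm x.
Hypothesis Hc2 : 0 <= c2.
Hypothesis Hup : forall (x : V) B, (forall i, Rabs (x i) <= B) -> nrm x <= c2 * B.

Local Notation n0 := (nrm_ge0 nrm Hnorm).
Local Notation nsym := (nrm_sub_sym nrm Hnorm).
Local Notation ntri := (nrm_sub_tri nrm Hnorm).
Local Notation nsub0 := (nrm_sub0 nrm).

Lemma Neps_parts t z0 z1 x0 x1 : Neps nrm eps P t z0 z1 x0 x1 ->
  Rabs t <= eps /\ nrm z0 <= eps /\ nrm z1 <= eps /\ nrm (vsub x0 P) <= eps /\ nrm (vsub x1 P) <= eps.
Proof.
  unfold Neps; intros. pose proof (Rabs_pos t). pose proof (n0 z0). pose proof (n0 z1).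
  pose proof (n0 (vsub x0 P)). pose proof (n0 (vsub x1 P)). lra.
Qed.

Lemma Neps_bounds t z0 z1 x0 x1 r A Bq :
  Rabs t <= r -> nrm z0 <= A -> nrm z1 <= A -> nrm (vsub x0 P) <= Bq -> nrm (vsub x1 P) <= Bq ->
  r + 2 * A + 2 * Bq <= eps -> Neps nrm eps P t z0 z1 x0 x1.
Proof. unfold Neps; intros; lra. Qed.

Lemma Hbound_center t z0 z1 x0 x1 : Neps nrm eps P t z0 z1 x0 x1 ->
  nrm (vsub (H t z0 z1 x0 x1) P) <=
  Lam * Rabs t + L0 * nrm z0 + L1 * nrm z1 + C0 * nrm (vsub x0 P) + C1 * nrm (vsub x1 P).
Proof.
  intros Hn. pose proof (Neps_parts _ _ _ _ _ Hn) as [h1 [h2 [h3 [h4 h5]]]].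
  pose proof (nrm_zero nrm Hnorm) as Z. pose proof (nrm_subxx nrm Hnorm P) as ZP.
  assert (N0 : Neps nrm eps P 0 z0 z1 x0 x1) by (unfold Neps in *; rewrite Rabs_R0; pose proof (Rabs_pos t); lra).
  assert (N1 : Neps nrm eps P 0 vzero vzero x0 x1) by (unfold Neps in *; rewrite Rabs_R0, Z; pose proof (Rabs_pos t); pose proof (n0 z0); pose proof (n0 z1); lra).
  assert (N2 : Neps nrm eps P 0 vzero vzero P P) by (unfold Neps; rewrite Rabs_R0, Z, ZP; lra).
  pose proof (Hi _ _ _ _ _ _ N0 Hn) as A1.
  pose proof (Hii _ _ _ _ _ _ _ N1 N0) as A2.
  pose proof (Hiii _ _ _ _ _ _ _ N2 N1) as A3.
  rewrite !nsub0, Rminus_0_r in *.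
  assert (E : nrm (vsub (H t z0 z1 x0 x1) (H 0 vzero vzero P P)) <=
    Lam * Rabs t + L0 * nrm z0 + L1 * nrm z1 + C0 * nrm (vsub x0 P) + C1 * nrm (vsub x1 P)).
  { eapply Rle_trans; [apply (ntri _ (H 0 z0 z1 x0 x1))|].
    eapply Rle_trans; [apply Rplus_le_compat_l, (ntri _ (H 0 vzero vzero x0 x1))|]. lra. }
  rewrite <- HP in E. exact E.
Qed.

Lemma Hbound_pair t s z0 z1 x0 x1 z0' z1' x0' x1' :
  Neps nrm eps P t z0 z1 x0 x1 -> Neps nrm eps P s z0 z1 x0 x1 ->
  Neps nrm eps P s z0' z1' x0 x1 -> Neps nrm eps P s z0' z1' x0' x1' ->
  nrm (vsub (H s z0' z1' x0' x1') (H t z0 z1 x0 x1)) <=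
  Lam * Rabs (s - t) + L0 * nrm (vsub z0' z0) + L1 * nrm (vsub z1' z1)
  + C0 * nrm (vsub x0' x0) + C1 * nrm (vsub x1' x1).
Proof.
  intros Np Nr1 Nr2 Nq.
  pose proof (Hi _ _ _ _ _ _ Np Nr1) as A1.
  pose proof (Hii _ _ _ _ _ _ _ Nr1 Nr2) as A2.
  pose proof (Hiii _ _ _ _ _ _ _ Nr2 Nq) as A3.
  eapply Rle_trans; [apply (ntri _ (H s z0' z1' x0 x1))|].
  eapply Rle_trans; [apply Rplus_le_compat_l, (ntri _ (H s z0 z1 x0 x1))|]. lra.
Qed.

Definition Kw := c2 * (c1 * (nrm P + eps)).
Definition cc := Lam + (L0 + L1) * Kw.
Definition K1 := cc / (1 - (C0 + C1)).

Lemma Kw_pos : 0 <= Kw.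
Proof. unfold Kw. pose proof (n0 P). apply Rmult_le_pos; auto. apply Rmult_le_pos; lra. Qed.
Lemma K1_pos : 0 <= K1.
Proof. unfold K1, cc. pose proof Kw_pos. apply Rmult_le_pos; [nra|]. left; apply Rinv_0_lt_compat; lra. Qed.

Section One.
Variables (d : R) (W W' : R -> V).
Hypothesis Hd : 0 < d.
Hypothesis HC1on : C1_on (- d) d W W'.
Hypothesis Hrange : forall t, - d <= t <= d -> - d <= W t Fin.F1 <= d.
Hypothesis Heq : forall t, - d <= t <= d ->
       W' t = H t (W t) (W (W t Fin.F1)) (W' t) (W' (W t Fin.F1)).
Hypothesis HW0 : W 0 = vzero.
Hypothesis HW'0 : W' 0 = P.
Hypothesis HN : forall t, - d <= t <= d ->
       Neps nrm eps P t (W t) (W (W t Fin.F1)) (W' t) (W' (W t Fin.F1)).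

Lemma w_lip t s : - d <= t <= d -> - d <= s <= d -> Rabs (W t Fin.F1 - W s Fin.F1) <= Rabs (t - s).
Proof.
  intros Ht Hs. rewrite <- (Rmult_1_l (Rabs (t - s))).
  apply (mvt_le (- d) d 1 _ _ (C1_dwithin _ _ _ _ HC1on Fin.F1)); auto.
  intros u Hu. rewrite Heq by auto. apply Hiv, HN, Hu.
Qed.

Lemma w_small t : - d <= t <= d -> Rabs (W t Fin.F1) <= Rabs t.
Proof.
  intros Ht. pose proof (w_lip t 0 Ht ltac:(lra)). rewrite HW0 in H0. unfold vzero in H0.
  rewrite !Rminus_0_r in H0. exact H0.
Qed.

Lemma W_lip t s : - d <= t <= d -> - d <= s <= d -> nrm (vsub (W t) (W s)) <= Kw * Rabs (t - s).
Proof.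
  intros Ht Hs. unfold Kw. rewrite Rmult_assoc. apply Hup. intros i. unfold vsub.
  apply (mvt_le (- d) d _ _ _ (C1_dwithin _ _ _ _ HC1on i)); auto.
  intros u Hu. eapply Rle_trans; [apply Hlow|]. apply Rmult_le_compat_l; [lra|].
  pose proof (ntri (W' u) P vzero). rewrite !nsub0 in H0.
  pose proof (Neps_parts _ _ _ _ _ (HN u Hu)) as [_ [_ [_ [h _]]]]. lra.
Qed.

Lemma W_small t : - d <= t <= d -> nrm (W t) <= Kw * d.
Proof.
  intros Ht. pose proof (W_lip t 0 Ht ltac:(lra)). rewrite HW0, nsub0, Rminus_0_r in H0.
  pose proof Kw_pos. assert (Rabs t <= d) by (apply Rabs_le; lra). nra.
Qed.

Lemma a_small t : - d <= t <= d -> nrm (vsub (W' t) P) <= K1 * d.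
Proof.
  intros Ht.
  assert (Key : forall x, (exists u, - d <= u <= d /\ x = nrm (vsub (W' u) P)) -> x <= cc * d / (1 - (C0 + C1))).
  { apply (sup_fix _ eps); [lra| |].
    - intros x [u [Hu ->]]. apply (Neps_parts _ _ _ _ _ (HN u Hu)).
    - intros M HM x [u [Hu ->]].
      rewrite Heq at 1 by auto.
      eapply Rle_trans; [apply Hbound_center, HN, Hu|].
      pose proof (Hrange u Hu) as Hr.
      pose proof (W_small u Hu). pose proof (W_small _ Hr).
      assert (Rabs u <= d) by (apply Rabs_le; lra).
      pose proof (HM _ (ex_intro _ u (conj Hu eq_refl))).
      pose proof (HM _ (ex_intro _ _ (conj Hr eq_refl))).
      unfold cc. nra. }
  pose proof (Key _ (ex_intro _ t (conj Ht eq_refl))). unfold K1. unfold Rdiv in *. nra.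
Qed.

Hypothesis Hsmall : d * (1 + 2 * Kw + 2 * K1) <= eps.

Lemma Wp_lip t s : - d <= t <= d -> - d <= s <= d -> nrm (vsub (W' t) (W' s)) <= K1 * Rabs (t - s).
Proof.
  intros Ht Hs.
  pose proof Kw_pos as HKw. pose proof K1_pos as HK1.
  assert (Key : forall h, 0 <= h -> forall x, (exists u v, - d <= u <= d /\ - d <= v <= d /\ Rabs (u - v) <= h /\
      x = nrm (vsub (W' u) (W' v))) -> x <= cc * h / (1 - (C0 + C1))).
  { intros h Hh. apply (sup_fix _ (2 * eps)); [lra| |].
    - intros x [u [v [Hu [Hv [_ ->]]]]].
      pose proof (ntri (W' u) P (W' v)). rewrite (nsym P) in H0.
      pose proof (Neps_parts _ _ _ _ _ (HN u Hu)) as [_ [_ [_ [h1 _]]]].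
      pose proof (Neps_parts _ _ _ _ _ (HN v Hv)) as [_ [_ [_ [h2 _]]]]. lra.
    - intros M HM x [u [v [Hu [Hv [Huv ->]]]]].
      rewrite nsym. rewrite (Heq v Hv) at 1. rewrite (Heq u Hu) at 1.
      pose proof (Hrange u Hu) as Hru. pose proof (Hrange v Hv) as Hrv.
      assert (Nr1 : Neps nrm eps P v (W u) (W (W u Fin.F1)) (W' u) (W' (W u Fin.F1))).
      { apply (Neps_bounds _ _ _ _ _ d (Kw * d) (K1 * d)).
        - apply Rabs_le; lra.
        - apply W_small; auto. - apply W_small; auto.
        - apply a_small; auto. - apply a_small; auto. - lra. }
      assert (Nr2 : Neps nrm eps P v (W v) (W (W v Fin.F1)) (W' u) (W' (W u Fin.F1))).
      { apply (Neps_bounds _ _ _ _ _ d (Kw * d) (K1 * d)).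
        - apply Rabs_le; lra.
        - apply W_small; auto. - apply W_small; auto.
        - apply a_small; auto. - apply a_small; auto. - lra. }
      eapply Rle_trans; [apply (Hbound_pair u v); auto|].
      pose proof (W_lip v u Hv Hu). pose proof (W_lip _ _ Hrv Hru).
      pose proof (w_lip v u Hv Hu).
      assert (Huv' : Rabs (v - u) <= h) by (rewrite Rabs_minus_sym; exact Huv).
      pose proof (HM _ (ex_intro _ v (ex_intro _ u (conj Hv (conj Hu (conj Huv' eq_refl)))))).
      assert (Rabs (W v Fin.F1 - W u Fin.F1) <= h) by (rewrite Rabs_minus_sym in Huv; lra).
      pose proof (HM _ (ex_intro _ (W v Fin.F1) (ex_intro _ (W u Fin.F1) (conj Hrv (conj Hru (conj H4 eq_refl)))))).
      rewrite Rabs_minus_sym in Huv.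
      assert (Lam * Rabs (v - u) <= Lam * h) by (apply Rmult_le_compat_l; lra).
      assert (Kw * Rabs (v - u) <= Kw * h) by (apply Rmult_le_compat_l; lra).
      assert (Kw * Rabs (W v Fin.F1 - W u Fin.F1) <= Kw * h) by (apply Rmult_le_compat_l; lra).
      assert (L0 * nrm (vsub (W v) (W u)) <= L0 * (Kw * h)) by (apply Rmult_le_compat_l; lra).
      assert (L1 * nrm (vsub (W (W v Fin.F1)) (W (W u Fin.F1))) <= L1 * (Kw * h)) by (apply Rmult_le_compat_l; lra).
      assert (C0 * nrm (vsub (W' v) (W' u)) <= C0 * M) by (apply Rmult_le_compat_l; lra).
      assert (C1 * nrm (vsub (W' (W v Fin.F1)) (W' (W u Fin.F1))) <= C1 * M) by (apply Rmult_le_compat_l; lra).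
      unfold cc. nra. }
  pose proof (Key (Rabs (t - s)) (Rabs_pos _) _ (ex_intro _ t (ex_intro _ s (conj Ht (conj Hs (conj (Rle_refl _) eq_refl)))))).
  unfold K1. unfold Rdiv in *. nra.
Qed.

End One.

Definition K3 := c2 * c1.
Definition alpha := L0 * K3 + L1 * K3 + L1 * Kw * c1 + C1 * K1 * c1.

Lemma alpha_pos : 0 <= alpha.
Proof.
  unfold alpha, K3. pose proof Kw_pos; pose proof K1_pos.
  assert (0 <= c2 * c1) by nra. assert (0 <= Kw * c1) by nra. assert (0 <= K1 * c1) by nra.
  assert (0 <= L1 * Kw * c1) by (rewrite Rmult_assoc; nra).
  assert (0 <= C1 * K1 * c1) by (rewrite Rmult_assoc; nra). nra.
Qed.

Lemma uniq (d1 d2 : R) (W1 W1' W2 W2' : R -> V)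
  (Hd1 : 0 < d1) (HC1on1 : C1_on (- d1) d1 W1 W1')
  (Hrange1 : forall t, - d1 <= t <= d1 -> - d1 <= W1 t Fin.F1 <= d1)
  (Heq1 : forall t, - d1 <= t <= d1 -> W1' t = H t (W1 t) (W1 (W1 t Fin.F1)) (W1' t) (W1' (W1 t Fin.F1)))
  (HW10 : W1 0 = vzero) (HW1'0 : W1' 0 = P)
  (HN1 : forall t, - d1 <= t <= d1 -> Neps nrm eps P t (W1 t) (W1 (W1 t Fin.F1)) (W1' t) (W1' (W1 t Fin.F1)))
  (Hsmall1 : d1 * (1 + 2 * Kw + 2 * K1) <= eps)
  (Hd2 : 0 < d2) (HC1on2 : C1_on (- d2) d2 W2 W2')
  (Hrange2 : forall t, - d2 <= t <= d2 -> - d2 <= W2 t Fin.F1 <= d2)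
  (Heq2 : forall t, - d2 <= t <= d2 -> W2' t = H t (W2 t) (W2 (W2 t Fin.F1)) (W2' t) (W2' (W2 t Fin.F1)))
  (HW20 : W2 0 = vzero) (HW2'0 : W2' 0 = P)
  (HN2 : forall t, - d2 <= t <= d2 -> Neps nrm eps P t (W2 t) (W2 (W2 t Fin.F1)) (W2' t) (W2' (W2 t Fin.F1)))
  (Hsmall2 : d2 * (1 + 2 * Kw + 2 * K1) <= eps)
  (Hcontr : alpha * Rmin d1 d2 + (C0 + C1) < 1) :
  forall t, Rabs t <= Rmin d1 d2 -> forall i, W1 t i = W2 t i.
Proof.
  set (de := Rmin d1 d2) in *.
  assert (hde1 : de <= d1) by apply Rmin_l. assert (hde2 : de <= d2) by apply Rmin_r.
  assert (hde : 0 < de) by (apply Rmin_glb_lt; auto).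
  set (dm := Rmax d1 d2).
  assert (hdm1 : d1 <= dm) by apply Rmax_l. assert (hdm2 : d2 <= dm) by apply Rmax_r.
  assert (Hsm : dm * (1 + 2 * Kw + 2 * K1) <= eps) by (unfold dm; apply Rmax_case; auto).
  pose proof Kw_pos as HKw. pose proof K1_pos as HK1. pose proof alpha_pos as Hal.
  assert (HDw : forall i, dwithin (- de) de (fun t => W1 t i - W2 t i) (fun t => W1' t i - W2' t i)).
  { intros i. apply dwithin_minus.
    - apply (dwithin_sub (- d1) d1); [apply C1_dwithin; auto|lra|lra].
    - apply (dwithin_sub (- d2) d2); [apply C1_dwithin; auto|lra|lra]. }
  assert (Key : forall x, (exists u, - de <= u <= de /\ x = nrm (vsub (W1' u) (W2' u))) ->
     x <= 0 / (1 - (alpha * de + (C0 + C1)))).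
  { apply (sup_fix _ (2 * eps)).
    - split; [|lra]. pose proof (Rmult_le_pos _ _ Hal (Rlt_le _ _ hde)). lra.
    - intros x [u [Hu ->]].
      pose proof (ntri (W1' u) P (W2' u)). rewrite (nsym P) in H0.
      pose proof (Neps_parts _ _ _ _ _ (HN1 u ltac:(lra))) as [_ [_ [_ [h1 _]]]].
      pose proof (Neps_parts _ _ _ _ _ (HN2 u ltac:(lra))) as [_ [_ [_ [h2 _]]]]. lra.
    - intros M HM x [u [Hu ->]].
      assert (HM0 : 0 <= M) by (eapply Rle_trans; [apply n0|apply (HM _ (ex_intro _ u (conj Hu eq_refl)))]).
      assert (HE : forall v i, - de <= v <= de -> Rabs (W1' v i - W2' v i) <= c1 * M).
      { intros v i Hv. eapply Rle_trans; [apply (Hlow (vsub (W1' v) (W2' v)) i)|].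
        apply Rmult_le_compat_l; [lra|]. apply HM. exists v; auto. }
      assert (HD : forall v i, - de <= v <= de -> Rabs (W1 v i - W2 v i) <= c1 * M * de).
      { intros v i Hv. pose proof (mvt_le _ _ _ _ _ (HDw i) (fun t Ht => HE t i Ht) 0 v ltac:(lra) Hv).
        cbv beta in H0. rewrite HW10, HW20 in H0. unfold vzero in H0.
        replace (W1 v i - W2 v i - (0 - 0)) with (W1 v i - W2 v i) in H0 by ring. rewrite Rminus_0_r in H0.
        assert (Rabs v <= de) by (apply Rabs_le; lra).
        assert (0 <= c1 * M) by nra. nra. }
      assert (HDn : forall v, - de <= v <= de -> nrm (vsub (W1 v) (W2 v)) <= K3 * M * de).
      { intros v Hv. unfold K3. replace (c2 * c1 * M * de) with (c2 * (c1 * M * de)) by ring.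
        apply Hup. intros i; unfold vsub; auto. }
      assert (Hu1 : - d1 <= u <= d1) by lra. assert (Hu2 : - d2 <= u <= d2) by lra.
      set (w1 := W1 u Fin.F1). set (w2 := W2 u Fin.F1).
      assert (Hw1 : Rabs w1 <= Rabs u) by (eapply w_small with (d := d1); eauto).
      assert (Hw1' : - de <= w1 <= de).
      { assert (Rabs u <= de) by (apply Rabs_le; lra).
        pose proof (Rle_abs w1). pose proof (Rle_abs (- w1)). rewrite Rabs_Ropp in H2. lra. }
      assert (Hw1r2 : - d2 <= w1 <= d2) by lra.
      assert (Hw2 : - d2 <= w2 <= d2) by (apply Hrange2; auto).
      assert (Hw1r1 : - d1 <= w1 <= d1) by (apply Hrange1; auto).
      assert (Hww : Rabs (w1 - w2) <= c1 * M * de) by (apply HD; auto).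
      assert (T1 : nrm (vsub (W1 w1) (W2 w2)) <= K3 * M * de + Kw * (c1 * M * de)).
      { eapply Rle_trans; [apply (ntri _ (W2 w1))|].
        pose proof (HDn w1 Hw1').
        assert (nrm (vsub (W2 w1) (W2 w2)) <= Kw * Rabs (w1 - w2)) by (eapply W_lip with (d := d2); eauto).
        assert (Kw * Rabs (w1 - w2) <= Kw * (c1 * M * de)) by (apply Rmult_le_compat_l; auto). lra. }
      assert (T2 : nrm (vsub (W1' w1) (W2' w2)) <= M + K1 * (c1 * M * de)).
      { eapply Rle_trans; [apply (ntri _ (W2' w1))|].
        pose proof (HM _ (ex_intro _ w1 (conj Hw1' eq_refl))).
        assert (nrm (vsub (W2' w1) (W2' w2)) <= K1 * Rabs (w1 - w2)) by (eapply Wp_lip with (d := d2); eauto).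
        assert (K1 * Rabs (w1 - w2) <= K1 * (c1 * M * de)) by (apply Rmult_le_compat_l; auto). lra. }
      pose proof (HM _ (ex_intro _ u (conj Hu eq_refl))) as T3.
      pose proof (HDn u Hu) as T4.
      rewrite (Heq1 u Hu1) at 1. rewrite (Heq2 u Hu2) at 1.
      fold w1 w2.
      assert (Nr : Neps nrm eps P u (W1 u) (W1 w1) (W2' u) (W2' w2)).
      { apply (Neps_bounds _ _ _ _ _ dm (Kw * dm) (K1 * dm)).
        - apply Rabs_le; lra.
        - eapply Rle_trans; [eapply W_small with (d := d1); eauto|apply Rmult_le_compat_l; lra].
        - eapply Rle_trans; [eapply W_small with (d := d1); eauto|apply Rmult_le_compat_l; lra].
        - eapply Rle_trans; [eapply a_small with (d := d2); eauto|apply Rmult_le_compat_l; lra].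
        - eapply Rle_trans; [eapply a_small with (d := d2); eauto|apply Rmult_le_compat_l; lra].
        - nra. }
      eapply Rle_trans; [apply (Hbound_pair u u); [apply HN2; auto|apply HN2; auto|exact Nr|apply HN1; auto]|].
      rewrite Rminus_diag, Rabs_R0, Rmult_0_r, Rplus_0_l.
      assert (L0 * nrm (vsub (W1 u) (W2 u)) <= L0 * (K3 * M * de)) by (apply Rmult_le_compat_l; lra).
      assert (L1 * nrm (vsub (W1 w1) (W2 w2)) <= L1 * (K3 * M * de + Kw * (c1 * M * de))) by (apply Rmult_le_compat_l; lra).
      assert (C0 * nrm (vsub (W1' u) (W2' u)) <= C0 * M) by (apply Rmult_le_compat_l; lra).
      assert (C1 * nrm (vsub (W1' w1) (W2' w2)) <= C1 * (M + K1 * (c1 * M * de))) by (apply Rmult_le_compat_l; lra).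
      unfold alpha. nra. }
  intros t Ht i.
  assert (Ht' : - de <= t <= de) by (unfold Rabs in Ht; destruct Rcase_abs in Ht; lra).
  assert (HE0 : forall v j, - de <= v <= de -> Rabs (W1' v j - W2' v j) <= 0).
  { intros v j Hv. pose proof (Key _ (ex_intro _ v (conj Hv eq_refl))).
    unfold Rdiv in H0; rewrite Rmult_0_l in H0.
    assert (nrm (vsub (W1' v) (W2' v)) = 0) by (pose proof (n0 (vsub (W1' v) (W2' v))); lra).
    pose proof (nrm_def nrm Hnorm _ H1 j). unfold vsub in H2. rewrite H2, Rabs_R0. lra. }
  pose proof (mvt_le _ _ _ _ _ (HDw i) (fun v Hv => HE0 v i Hv) 0 t ltac:(lra) Ht').
  cbv beta in H0. rewrite HW10, HW20 in H0. unfold vzero in H0. rewrite Rmult_0_l in H0.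
  pose proof (Rabs_pos (W1 t i - W2 t i - (0 - 0))).
  assert (Rabs (W1 t i - W2 t i - (0 - 0)) = 0) by lra.
  pose proof (Rle_abs (W1 t i - W2 t i - (0 - 0))). pose proof (Rle_abs (- (W1 t i - W2 t i - (0 - 0)))).
  rewrite Rabs_Ropp in H4. lra.
Qed.

Lemma main_sec : exists dstar, 0 < dstar /\
  forall (d1 d2 : R) (W1 W1' W2 W2' : R -> V),
    0 < d1 <= dstar -> 0 < d2 <= dstar ->
    C1_on (- d1) d1 W1 W1' ->
    (forall t, - d1 <= t <= d1 -> - d1 <= W1 t Fin.F1 <= d1) ->
    (forall t, - d1 <= t <= d1 ->
       W1' t = H t (W1 t) (W1 (W1 t Fin.F1)) (W1' t) (W1' (W1 t Fin.F1))) ->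
    W1 0 = vzero -> W1' 0 = P ->
    (forall t, - d1 <= t <= d1 ->
       Neps nrm eps P t (W1 t) (W1 (W1 t Fin.F1)) (W1' t) (W1' (W1 t Fin.F1))) ->
    C1_on (- d2) d2 W2 W2' ->
    (forall t, - d2 <= t <= d2 -> - d2 <= W2 t Fin.F1 <= d2) ->
    (forall t, - d2 <= t <= d2 ->
       W2' t = H t (W2 t) (W2 (W2 t Fin.F1)) (W2' t) (W2' (W2 t Fin.F1))) ->
    W2 0 = vzero -> W2' 0 = P ->
    (forall t, - d2 <= t <= d2 ->
       Neps nrm eps P t (W2 t) (W2 (W2 t Fin.F1)) (W2' t) (W2' (W2 t Fin.F1))) ->
    forall t, Rabs t <= Rmin d1 d2 -> forall i, W1 t i = W2 t i.
Proof.
  pose proof Kw_pos as HKw. pose proof K1_pos as HK1. pose proof alpha_pos as Hal.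
  set (k := 1 + 2 * Kw + 2 * K1).
  assert (Hk : 0 < k) by (unfold k; lra).
  set (ds := Rmin (eps / k) ((1 - (C0 + C1)) / (2 * (alpha + 1)))).
  assert (Hds1 : ds <= eps / k) by apply Rmin_l.
  assert (Hds2 : ds <= (1 - (C0 + C1)) / (2 * (alpha + 1))) by apply Rmin_r.
  assert (Hds : 0 < ds).
  { apply Rmin_glb_lt; apply Rdiv_lt_0_compat; lra. }
  exists ds; split; auto.
  intros d1 d2 W1 W1' W2 W2' Hd1 Hd2 A1 A2 A3 A4 A5 A6 B1 B2 B3 B4 B5 B6.
  assert (Sm : forall d, d <= ds -> d * k <= eps).
  { intros d hd. apply (Rmult_le_reg_r (/ k)); [apply Rinv_0_lt_compat; lra|].
    rewrite Rmult_assoc, Rinv_r by lra. unfold Rdiv in Hds1. lra. }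
  assert (Hmin : Rmin d1 d2 <= ds) by (eapply Rle_trans; [apply Rmin_l|lra]).
  assert (Hmin0 : 0 < Rmin d1 d2) by (apply Rmin_glb_lt; lra).
  eapply uniq; eauto; try (apply Sm; lra).
  1-2: lra.
  assert (alpha * Rmin d1 d2 <= alpha * ((1 - (C0 + C1)) / (2 * (alpha + 1)))) by
    (apply Rmult_le_compat_l; lra).
  assert (alpha * ((1 - (C0 + C1)) / (2 * (alpha + 1))) < 1 - (C0 + C1)).
  { unfold Rdiv. apply (Rmult_lt_reg_r (2 * (alpha + 1))); [lra|].
    rewrite !Rmult_assoc, Rinv_l by lra. nra. }
  lra.
Qed.
End Main.

Theorem theorem4p4 (m : nat)
  (nrm : vec (S m) -> R) (Hnorm : is_norm nrm)
  (U : R -> vec (S m) -> vec (S m) -> vec (S m) -> vec (S m) -> Prop)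
  (HU : open5 nrm U)
  (H : R -> vec (S m) -> vec (S m) -> vec (S m) -> vec (S m) -> vec (S m))
  (Hcont : continuous_on5 nrm U H)
  (P : vec (S m))
  (HP : P = H 0 vzero vzero P P)
  (Hp1 : Rabs (P Fin.F1) <= 1)
  (eps Lam L0 L1 C0 C1 : R)
  (Heps : 0 < eps)
  (HLam : 0 <= Lam) (HL0 : 0 <= L0) (HL1 : 0 <= L1) (HC0 : 0 <= C0) (HC1 : 0 <= C1)
  (HN : forall t z0 z1 x0 x1, Neps nrm eps P t z0 z1 x0 x1 -> U t z0 z1 x0 x1)
  (Hi : forall t t' z0 z1 x0 x1,
     Neps nrm eps P t z0 z1 x0 x1 -> Neps nrm eps P t' z0 z1 x0 x1 ->
     nrm (vsub (H t' z0 z1 x0 x1) (H t z0 z1 x0 x1)) <= Lam * Rabs (t' - t))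
  (Hii : forall t z0 z1 z0' z1' x0 x1,
     Neps nrm eps P t z0 z1 x0 x1 -> Neps nrm eps P t z0' z1' x0 x1 ->
     nrm (vsub (H t z0' z1' x0 x1) (H t z0 z1 x0 x1))
       <= L0 * nrm (vsub z0' z0) + L1 * nrm (vsub z1' z1))
  (Hiii : forall t z0 z1 x0 x1 x0' x1',
     Neps nrm eps P t z0 z1 x0 x1 -> Neps nrm eps P t z0 z1 x0' x1' ->
     nrm (vsub (H t z0 z1 x0' x1') (H t z0 z1 x0 x1))
       <= C0 * nrm (vsub x0' x0) + C1 * nrm (vsub x1' x1))
  (HC : C0 + C1 < 1)
  (Hiv : forall t z0 z1 x0 x1,
     Neps nrm eps P t z0 z1 x0 x1 -> Rabs (H t z0 z1 x0 x1 Fin.F1) <= 1) :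
  exists dstar, 0 < dstar /\
  forall (d1 d2 : R) (W1 W1' W2 W2' : R -> vec (S m)),
    0 < d1 <= dstar -> 0 < d2 <= dstar ->
    (* conditions on W^1 *)
    C1_on (- d1) d1 W1 W1' ->
    (forall t, - d1 <= t <= d1 -> - d1 <= W1 t Fin.F1 <= d1) ->
    (forall t, - d1 <= t <= d1 ->
       W1' t = H t (W1 t) (W1 (W1 t Fin.F1)) (W1' t) (W1' (W1 t Fin.F1))) ->
    W1 0 = vzero -> W1' 0 = P ->
    (forall t, - d1 <= t <= d1 ->
       Neps nrm eps P t (W1 t) (W1 (W1 t Fin.F1)) (W1' t) (W1' (W1 t Fin.F1))) ->
    (* conditions on W^2 *)
    C1_on (- d2) d2 W2 W2' ->
    (forall t, - d2 <= t <= d2 -> - d2 <= W2 t Fin.F1 <= d2) ->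
    (forall t, - d2 <= t <= d2 ->
       W2' t = H t (W2 t) (W2 (W2 t Fin.F1)) (W2' t) (W2' (W2 t Fin.F1))) ->
    W2 0 = vzero -> W2' 0 = P ->
    (forall t, - d2 <= t <= d2 ->
       Neps nrm eps P t (W2 t) (W2 (W2 t Fin.F1)) (W2' t) (W2' (W2 t Fin.F1))) ->
    forall t, Rabs t <= Rmin d1 d2 -> forall i, W1 t i = W2 t i.
Proof.
  destruct (norm_lower _ nrm Hnorm) as [c1 [Hc1 Hlow]].
  destruct (norm_upper _ nrm Hnorm) as [c2 [Hc2 Hup]].
  exact (main_sec m nrm Hnorm H P HP eps Lam L0 L1 C0 C1 Heps HLam HL0 HL1 HC0 HC1 Hi Hii Hiii HC Hiv c1 c2 Hc1 Hlow Hc2 Hup).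
Qed.
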